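(* Let $\{G^i\}_{i\in I}$, $G^i=(V,\{S^i_v\}_{v\in V},\{u^i_v\}_{v\in V})$, be a finite family of games over the same graph $\Gamma=(V,E)$. If $\langle s^i_v\rangle_{v\in V}\in NE(G^i)$ for each $i\in I$, then $\langle\langle s^i_v\rangle_{i\in I}\rangle_{v\in V}\in NE(\prod_{i\in I}G^i)$.
   Context: A game over a finite simple undirected graph $\Gamma=(V,E)$ is a strategic game with player set $V$, finite strategy sets, and real pay-off functions $u_v$ depending only on the strategies of $v$ and its neighbours. $NE(G)$ is the set of pure Nash equilibria. The product $\prod_{i\in I}G^i$ is the game with player set $V$, strategy sets $S_v=\prod_{i\in I}S^i_v$, and pay-offs $u_v=\sum_{i\in I}u^i_v$ (where $u^i_v$ is evaluated at the $i$-th components of the profile); a profile of the product is written $\langle\langle s^i_v\rangle_{i\in I}\rangle_{v\in V}$. *)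

(* Defs.v *)
From HB Require Import structures.
From mathcomp Require Import all_boot all_order all_algebra.
From mathcomp Require Import reals.
Set Implicit Arguments. Unset Strict Implicit. Unset Printing Implicit Defensive.
Import Order.TTheory GRing.Theory Num.Theory.
Local Open Scope ring_scope.

Definition simple_graph (V : finType) (e : rel V) : Prop :=
  symmetric e /\ irreflexive e.

Definition profile (V : finType) (S : V -> finType) := forall v : V, S v.

Definition local_payoffs (R : realType) (V : finType) (e : rel V)
    (S : V -> finType) (u : V -> profile S -> R) : Prop :=
  forall (v : V) (p q : profile S),
    (forall w : V, (w == v) || e v w -> p w = q w) -> u v p = u v q.

Definition game_over (R : realType) (V : finType) (e : rel V)
    (S : V -> finType) (u : V -> profile S -> R) : Prop :=
  simple_graph e /\ local_payoffs e u.

Definition is_NE (R : realType) (V : finType) (S : V -> finType)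
    (u : V -> profile S -> R) (s : profile S) : Prop :=
  forall (v : V) (x : S v), u v (dfwith s x) <= u v s.

Definition prod_strat (I V : finType) (S : I -> V -> finType) (v : V) : finType :=
  {dffun forall i : I, S i v}.

Definition prod_payoff (R : realType) (I V : finType) (S : I -> V -> finType)
    (u : forall i : I, V -> profile (S i) -> R)
    (v : V) (p : profile (prod_strat S)) : R :=
  \sum_(i : I) u i v (fun w => p w i).

Definition prod_profile (I V : finType) (S : I -> V -> finType)
    (s : forall i : I, profile (S i)) : profile (prod_strat S) :=
  fun v => [ffun i => s i v].

(* Main.v *)
Require Import Defs.
From HB Require Import structures.
From mathcomp Require Import all_boot all_order all_algebra.
From mathcomp Require Import reals.
Local Open Scope ring_scope.
Import Order.TTheory GRing.Theory Num.Theory.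

Theorem lemma18 (R : realType) (I V : finType) (e : rel V)
    (S : I -> V -> finType) (u : forall i : I, V -> profile (S i) -> R)
    (Hgame : forall i : I, game_over e (u i))
    (s : forall i : I, profile (S i))
    (Hs : forall i : I, is_NE (u i) (s i)) :
  is_NE (prod_payoff u) (prod_profile s).
Proof.
move=> v x; rewrite /prod_payoff; apply: ler_sum => i _.
have -> : u i v (fun w => dfwith (prod_profile s) x w i) = u i v (dfwith (s i) (x i)).
  case: (Hgame i) => _ Hl; apply: Hl => w _.
  rewrite /dfwith; case: eqP => [E|NE]; last by rewrite /prod_profile ffunE.
  by subst w.
have -> : u i v (fun w => prod_profile s w i) = u i v (s i).
  case: (Hgame i) => _ Hl; apply: Hl => w _; by rewrite /prod_profile ffunE.
exact: Hs.
Qed.
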